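(* Let $G$ be a digraph with a fixed upward planar drawing and let $\mathcal{P}$ be a set of pairwise vertex disjoint directed paths in $G$. Then (1) the relation $\prec_{\mathcal{P}}$ is irreflexive, and (2) $\prec_{\mathcal{P}}$ is anti-symmetric, i.e. if $P_1\prec_{\mathcal{P}}P_2$ then $P_2\not\prec_{\mathcal{P}}P_1$ for any $P_1,P_2\in\mathcal{P}$.
   Context: An upward planar drawing of a digraph is a plane drawing (no edge crossings) in which every directed edge is a curve monotone increasing in the $y$-direction from tail to head. A path is identified with the set of points of $\mathbb{R}^2$ in its drawing. For a path $P$ with endpoints $(x,y)$, $(x',y')$, $y\le y'$, let $\mathrm{Right}(P):=\{(u,v)\in\mathbb{R}^2: y\le v\le y',\ u'<u \text{ for all } u' \text{ with } (u',v)\in P\}$ and $\mathrm{Left}(P):=\{(u,v)\in\mathbb{R}^2: y\le v\le y',\ u'>u \text{ for all } u' \text{ with } (u',v)\in P\}$. A point $p\notin P$ is to the right of $P$ if $p\in\mathrm{Right}(P)$ and to the left of $P$ if $p\in\mathrm{Left}(P)$. For vertex disjoint paths $P,Q$, write $Q\prec P$ ($P$ is to the right of $Q$) if some point of $P$ is to the right of $Q$. $\prec_{\mathcal{P}}$ denotes the restriction of $\prec$ to the paths in $\mathcal{P}$. *)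

(* Defs.v *)
From Stdlib Require Import Reals List.
Import ListNotations.
Open Scope R_scope.

Definition point := (R * R)%type.

Section Drawing.
Variables (V Ed : Type) (tail head : Ed -> V).

Definition finite_digraph : Prop :=
  (exists lv : list V, forall v, In v lv) /\ (exists le : list Ed, forall e, In e le).

(* A drawing: vertex v is drawn at pos v; edge e is drawn as the curve
   curve e restricted to the parameter interval [0,1]. *)
Variables (pos : V -> point) (curve : Ed -> R -> point).

Definition in01 (s : R) : Prop := 0 <= s <= 1.

Definition upward_planar_drawing : Prop :=
  (forall v w, pos v = pos w -> v = w) /\
  (forall e, forall s, in01 s -> continuity_pt (fun t => fst (curve e t)) s
                              /\ continuity_pt (fun t => snd (curve e t)) s) /\
  (forall e, curve e 0 = pos (tail e) /\ curve e 1 = pos (head e)) /\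
  (forall e s t, in01 s -> in01 t -> s < t -> snd (curve e s) < snd (curve e t)) /\
  (forall e s v, 0 < s < 1 -> curve e s <> pos v) /\
  (forall e e' s t, e <> e' -> in01 s -> in01 t -> curve e s = curve e' t ->
     exists v, curve e s = pos v).

Record dpath := DPath { pverts : list V; pedges : list Ed }.

Definition is_dpath (P : dpath) : Prop :=
  pverts P <> [] /\ NoDup (pverts P) /\
  length (pverts P) = S (length (pedges P)) /\
  forall i e, nth_error (pedges P) i = Some e ->
    nth_error (pverts P) i = Some (tail e) /\
    nth_error (pverts P) (S i) = Some (head e).

Definition pts (P : dpath) (p : point) : Prop :=
  (exists v, In v (pverts P) /\ p = pos v) \/
  (exists e s, In e (pedges P) /\ in01 s /\ p = curve e s).

Definition first_vertex (P : dpath) (v0 : V) : V := hd v0 (pverts P).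
Definition last_vertex (P : dpath) (v0 : V) : V := last (pverts P) v0.

(* Right(P): with endpoints (x,y), (x',y'), y <= y', the points (u,v) with
   y <= v <= y' lying strictly to the right of every point of P at height v.
   (The default v0 is irrelevant since paths are nonempty.) *)
Definition RightP (P : dpath) (p : point) : Prop :=
  forall v0 : V,
  let y1 := snd (pos (first_vertex P v0)) in
  let y2 := snd (pos (last_vertex P v0)) in
  Rmin y1 y2 <= snd p <= Rmax y1 y2 /\
  forall u', pts P (u', snd p) -> u' < fst p.

Definition right_of (P : dpath) (p : point) : Prop :=
  ~ pts P p /\ RightP P p.

Definition prec (Q P : dpath) : Prop :=
  exists p, pts P p /\ right_of Q p.

Definition prec_in (F : dpath -> Prop) (Q P : dpath) : Prop :=
  F Q /\ F P /\ prec Q P.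

Definition disjoint_path_family (F : dpath -> Prop) : Prop :=
  (forall P, F P -> is_dpath P) /\
  (forall P Q, F P -> F Q -> P <> Q -> forall v, In v (pverts P) -> ~ In v (pverts Q)).

End Drawing.

(* Main.v *)
Require Import Defs.
From Stdlib Require Import Reals List Lra ClassicalEpsilon Classical Ranalysis5.
Import ListNotations.
Open Scope R_scope.

Lemma cont_unfold (f : R -> R) a :
  continuity_pt f a <-> forall eps, 0 < eps -> exists d, 0 < d /\
     forall x, Rabs (x - a) < d -> Rabs (f x - f a) < eps.
Proof.
  unfold continuity_pt, continue_in, limit1_in, limit_in, D_x, no_cond; simpl; unfold Rdist.
  split.
  - intros H eps He. destruct (H eps He) as [d [Hd Hx]]. exists d; split; auto.
    intros x Hx'. destruct (Req_dec a x) as [<-|Hne].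
    + unfold Rminus; rewrite Rplus_opp_r, Rabs_R0; auto.
    + apply Hx; auto.
  - intros H eps He. destruct (H eps He) as [d [Hd Hx]]. exists d; split; auto.
    intros x [_ Hx']. apply Hx; auto.
Qed.

Lemma glue (f g h : R -> R) a d : 0 < d -> continuity_pt f a -> continuity_pt g a ->
  f a = g a -> (forall x, a - d < x <= a -> h x = f x) ->
  (forall x, a < x < a + d -> h x = g x) -> continuity_pt h a.
Proof.
  intros Hd Hf Hg Hfg H1 H2. rewrite cont_unfold in *.
  intros eps He. destruct (Hf eps He) as [d1 [Hd1 K1]]. destruct (Hg eps He) as [d2 [Hd2 K2]].
  exists (Rmin d (Rmin d1 d2)). split.
  { repeat apply Rmin_glb_lt; auto. }
  assert (Ha : h a = f a) by (apply H1; lra).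
  intros x Hx. pose proof (Rmin_l d (Rmin d1 d2)). pose proof (Rmin_r d (Rmin d1 d2)).
  pose proof (Rmin_l d1 d2). pose proof (Rmin_r d1 d2).
  rewrite Ha. apply Rabs_def2 in Hx. destruct (Rle_dec x a).
  - rewrite H1 by lra. apply K1. apply Rabs_def1; lra.
  - rewrite H2 by lra. rewrite Hfg. apply K2. apply Rabs_def1; lra.
Qed.

Lemma cont_shift (g : R -> R) a c : continuity_pt g (a - c) -> continuity_pt (fun x => g (x - c)) a.
Proof.
  rewrite !cont_unfold. intros H eps He. destruct (H eps He) as [d [Hd K]].
  exists d; split; auto. intros x Hx. apply K. replace (x - c - (a - c)) with (x - a) by ring. auto.
Qed.

Lemma cont_lin c a : continuity_pt (fun t => c + t) a.
Proof.
  rewrite cont_unfold. intros eps He. exists eps; split; auto. intros x Hx.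
  replace (c + x - (c + a)) with (x - a) by ring. auto.
Qed.

Lemma cont_cst c a : continuity_pt (fun _ => c) a.
Proof.
  rewrite cont_unfold. intros eps He. exists eps; split; auto. intros x Hx.
  unfold Rminus; rewrite Rplus_opp_r, Rabs_R0; auto.
Qed.

Lemma cont_ext (f g : R -> R) a : (forall x, f x = g x) -> continuity_pt f a -> continuity_pt g a.
Proof.
  rewrite !cont_unfold. intros E H eps He. destruct (H eps He) as [d [Hd K]].
  exists d; split; auto. intros x Hx. rewrite <- !E. auto.
Qed.

Definition Ginv (f : R -> R) (b : R) : R := epsilon (inhabits 0) (fun t => f t = b).

Lemma strict_le (f : R -> R) : (forall s t, s < t -> f s < f t) -> forall s t, s <= t -> f s <= f t.
Proof. intros H s t Hst. destruct Hst as [Hlt|Heq]. left; auto. right; subst; auto. Qed.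

Lemma strict_inj (f : R -> R) : (forall s t, s < t -> f s < f t) -> forall s t, f s = f t -> s = t.
Proof.
  intros H s t E. destruct (Rtotal_order s t) as [Hl|[Hl|Hl]]; auto.
  - apply H in Hl; lra.
  - apply H in Hl; lra.
Qed.

Lemma Ginv_spec (f : R -> R) :
  (forall s t, s < t -> f s < f t) -> (forall t, continuity_pt f t) ->
  (forall b, exists lb ub, f lb < b < f ub) ->
  forall b, f (Ginv f b) = b.
Proof.
  intros Hm Hc Hu b. unfold Ginv. apply epsilon_spec.
  destruct (Hu b) as [lb [ub [H1 H2]]].
  assert (lb < ub).
  { destruct (Rlt_le_dec lb ub); auto. apply (strict_le f Hm) in r. lra. }
  destruct (f_interv_is_interv f lb ub b H) as [x [_ Hx]]; [lra| intros; apply Hc |].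
  exists x; auto.
Qed.

Lemma Ginv_cont (f : R -> R) :
  (forall s t, s < t -> f s < f t) -> (forall t, continuity_pt f t) ->
  (forall b, exists lb ub, f lb < b < f ub) ->
  forall b, continuity_pt (Ginv f) b.
Proof.
  intros Hm Hc Hu b. pose proof (Ginv_spec f Hm Hc Hu) as Hs.
  destruct (Hu b) as [lb [ub [H1 H2]]].
  assert (Hlu : lb < ub).
  { destruct (Rlt_le_dec lb ub); auto. apply (strict_le f Hm) in r. lra. }
  apply (continuity_pt_recip_interv f (Ginv f) lb ub Hlu).
  - intros; apply Hm; lra.
  - intros x _ _. unfold comp, id. apply Hs.
  - intros x Hx1 Hx2. split.
    + destruct (Rle_lt_dec lb (Ginv f x)); auto. apply Hm in r. rewrite Hs in r. lra.
    + destruct (Rle_lt_dec (Ginv f x) ub); auto. apply Hm in r. rewrite Hs in r. lra.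
  - intros; apply Hc.
  - lra.
Qed.

Fixpoint chain {V Ed : Type} (tail head : Ed -> V) (v : V) (es : list Ed) (vs : list V) : Prop :=
  match es, vs with
  | [], [] => True
  | e :: es', w :: vs' => tail e = v /\ head e = w /\ chain tail head w es' vs'
  | _, _ => False
  end.

Fixpoint lastv {V : Type} (v : V) (vs : list V) : V :=
  match vs with [] => v | w :: vs' => lastv w vs' end.

Fixpoint gam {V Ed : Type} (head : Ed -> V) (pos : V -> point) (curve : Ed -> R -> point)
  (v : V) (es : list Ed) (t : R) : point :=
  match es with
  | [] => (fst (pos v), snd (pos v) + t)
  | e :: es' => if Rle_dec t 1 then curve e t else gam head pos curve (head e) es' (t - 1)
  end.

Definition ptsL {V Ed : Type} (pos : V -> point) (curve : Ed -> R -> point)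
  (vs : list V) (es : list Ed) (p : point) : Prop :=
  (exists v, In v vs /\ p = pos v) \/
  (exists e s, In e es /\ in01 s /\ p = curve e s).

Section S.
Context {V Ed : Type} {tail head : Ed -> V} {pos : V -> point} {curve : Ed -> R -> point}.
Context (Dr : upward_planar_drawing V Ed tail head pos curve).

Lemma gam0 v es vs : chain tail head v es vs -> gam head pos curve v es 0 = pos v.
Proof.
  destruct es as [|e es]; simpl.
  - intros _. destruct (pos v); simpl; f_equal; ring.
  - destruct vs; [tauto|]. intros [Ht _]. destruct (Rle_dec 0 1); [|lra].
    destruct Dr as [_ [_ [He _]]]. rewrite (proj1 (He e)), Ht; auto.
Qed.

Lemma gam_shift v e es w vs t : chain tail head v (e :: es) (w :: vs) -> 0 <= t ->
  gam head pos curve v (e :: es) (t + 1) = gam head pos curve w es t.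
Proof.
  intros [Ht [Hh Hc]] H0. simpl. rewrite Hh. destruct (Rle_dec (t + 1) 1).
  - assert (t = 0) by lra. subst t. rewrite Rplus_0_l. rewrite (gam0 w es vs Hc).
    destruct Dr as [_ [_ [He _]]]. rewrite (proj2 (He e)), Hh; auto.
  - f_equal; ring.
Qed.

Lemma gam_mono v es vs : chain tail head v es vs -> forall s t, 0 <= s -> s < t ->
  snd (gam head pos curve v es s) < snd (gam head pos curve v es t).
Proof.
  revert v vs; induction es as [|e es IH]; intros v vs Hc s t Hs Hst; simpl.
  - lra.
  - destruct vs as [|w vs]; [destruct Hc|]. destruct Hc as [Ht [Hh Hc]].
    destruct Dr as [_ [_ [He [Hm _]]]].
    destruct (Rle_dec s 1); destruct (Rle_dec t 1).
    + apply Hm; unfold in01; lra.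
    + apply Rle_lt_trans with (snd (curve e 1)).
      * destruct (Req_dec s 1) as [->|]; [lra|]. left; apply Hm; unfold in01; lra.
      * rewrite (proj2 (He e)), Hh, <- (gam0 w es vs Hc). apply (IH w vs Hc); lra.
    + lra.
    + apply (IH _ vs); [rewrite Hh; auto| lra | lra].
Qed.

Lemma gam_tail v es vs : chain tail head v es vs -> forall t, INR (length es) < t ->
  gam head pos curve v es t =
  (fst (pos (lastv v vs)), snd (pos (lastv v vs)) + (t - INR (length es))).
Proof.
  revert v vs; induction es as [|e es IH]; intros v vs Hc t Ht.
  - destruct vs; [|destruct Hc]. simpl. f_equal. f_equal. ring.
  - destruct vs as [|w vs]; [destruct Hc|]. destruct Hc as [Hta [Hh Hc]].
    replace (INR (length (e :: es))) with (INR (length es) + 1) in * by (simpl length; rewrite S_INR; ring).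
    pose proof (pos_INR (length es)).
    cbn [gam lastv]. destruct (Rle_dec t 1); [lra|]. rewrite Hh. rewrite (IH w vs Hc) by lra.
    f_equal. f_equal. ring.
Qed.

Lemma gam_end v es vs : chain tail head v es vs ->
  gam head pos curve v es (INR (length es)) = pos (lastv v vs).
Proof.
  revert v vs; induction es as [|e es IH]; intros v vs Hc.
  - destruct vs; [|destruct Hc]. apply (gam0 v [] [] Hc).
  - destruct vs as [|w vs]; [destruct Hc|].
    simpl length. rewrite S_INR. rewrite (gam_shift v e es w vs) by (auto; apply pos_INR).
    destruct Hc as [_ [_ Hc]]. simpl. apply IH; auto.
Qed.

Lemma gam_pts1 v es vs : chain tail head v es vs -> forall z, ptsL pos curve (v :: vs) es z ->
  exists t, 0 <= t <= INR (length es) /\ z = gam head pos curve v es t.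
Proof.
  revert v vs; induction es as [|e es IH]; intros v vs Hc z Hz.
  - destruct vs; [|destruct Hc]. destruct Hz as [[x [Hx ->]]|[e [s [[] _]]]].
    destruct Hx as [<-|[]]. exists 0; split; [simpl; lra|]. rewrite (gam0 v [] [] Hc); auto.
  - destruct vs as [|w vs]; [destruct Hc|]. pose proof Hc as Hc0.
    destruct Hc as [Hta [Hh Hc]]. simpl length; rewrite S_INR. pose proof (pos_INR (length es)).
    destruct Hz as [[x [Hx ->]]|[e' [s [He' [Hs ->]]]]].
    + destruct Hx as [<-|Hx].
      * exists 0; split; [lra|]. rewrite (gam0 v _ _ Hc0); auto.
      * destruct (IH w vs Hc (pos x)) as [t [Ht E]]. { left; exists x; auto. }
        exists (t + 1); split; [lra|]. rewrite (gam_shift v e es w vs) by (auto; lra). auto.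
    + destruct He' as [<-|He'].
      * exists s; unfold in01 in Hs; split; [lra|]. simpl. destruct (Rle_dec s 1); [auto|lra].
      * destruct (IH w vs Hc (curve e' s)) as [t [Ht E]]. { right; exists e', s; auto. }
        exists (t + 1); split; [lra|]. rewrite (gam_shift v e es w vs) by (auto; lra). auto.
Qed.

Lemma gam_pts2 v es vs : chain tail head v es vs -> forall t, 0 <= t <= INR (length es) ->
  ptsL pos curve (v :: vs) es (gam head pos curve v es t).
Proof.
  revert v vs; induction es as [|e es IH]; intros v vs Hc t Ht.
  - simpl in Ht. assert (t = 0) by lra. subst. rewrite (gam0 v [] vs Hc).
    left; exists v; simpl; auto.
  - destruct vs as [|w vs]; [destruct Hc|]. destruct Hc as [Hta [Hh Hc]].
    simpl length in Ht; rewrite S_INR in Ht. simpl. destruct (Rle_dec t 1).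
    + right; exists e, t; simpl; unfold in01; repeat split; auto; lra.
    + rewrite Hh. destruct (IH w vs Hc (t - 1)) as [[x [Hx E]]|[e' [s [He' [Hs E]]]]]; [lra| |].
      * left; exists x; simpl in *; auto.
      * right; exists e', s; simpl; auto.
Qed.

Lemma chain_mem v es vs : chain tail head v es vs -> forall e, In e es ->
  In (tail e) (v :: vs) /\ In (head e) (v :: vs).
Proof.
  revert v vs; induction es as [|e es IH]; intros v vs Hc e' He'.
  - destruct He'.
  - destruct vs as [|w vs]; [destruct Hc|]. destruct Hc as [Hta [Hh Hc]].
    destruct He' as [<-|He'].
    + rewrite Hta, Hh; simpl; auto.
    + destruct (IH w vs Hc e' He'); simpl in *; tauto.
Qed.

Lemma gam_cont (pr : point -> R) v es vs : chain tail head v es vs ->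
  (forall e s, in01 s -> continuity_pt (fun t => pr (curve e t)) s) ->
  (forall w a, continuity_pt (fun t => pr (fst (pos w), snd (pos w) + t)) a) ->
  forall a, 0 <= a -> continuity_pt (fun t => pr (gam head pos curve v es t)) a.
Proof.
  intros Hc0 Hce Hb. revert v vs Hc0; induction es as [|e es IH]; intros v vs Hc a Ha.
  - simpl. apply Hb.
  - destruct vs as [|w vs]; [destruct Hc|]. pose proof Hc as Hc1. destruct Hc as [Hta [Hh Hc]].
    simpl. rewrite Hh.
    destruct (Rtotal_order a 1) as [Hl|[He|Hg]].
    + apply (glue (fun t => pr (curve e t)) (fun t => pr (curve e t)) _ a (1 - a)); [lra| apply Hce; unfold in01; lra | apply Hce; unfold in01; lra | auto | |].
      * intros x Hx. destruct (Rle_dec x 1); [auto|lra].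
      * intros x Hx. destruct (Rle_dec x 1); [auto|lra].
    + subst a. apply (glue (fun t => pr (curve e t)) (fun t => pr (gam head pos curve w es (t - 1))) _ 1 1); [lra| apply Hce; unfold in01; lra | | | |].
      * apply (cont_shift (fun t => pr (gam head pos curve w es t))). apply (IH w vs Hc). lra.
      * replace (1 - 1) with 0 by ring. rewrite (gam0 w es vs Hc).
        destruct Dr as [_ [_ [He _]]]. rewrite (proj2 (He e)), Hh; auto.
      * intros x Hx. destruct (Rle_dec x 1); [auto|lra].
      * intros x Hx. destruct (Rle_dec x 1); [lra|auto].
    + apply (glue (fun t => pr (gam head pos curve w es (t - 1))) (fun t => pr (gam head pos curve w es (t - 1))) _ a (a - 1)); [lra| | | auto | |].
      * apply (cont_shift (fun t => pr (gam head pos curve w es t))). apply (IH w vs Hc). lra.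
      * apply (cont_shift (fun t => pr (gam head pos curve w es t))). apply (IH w vs Hc). lra.
      * intros x Hx. destruct (Rle_dec x 1); [lra|auto].
      * intros x Hx. destruct (Rle_dec x 1); [lra|auto].
Qed.

End S.

Definition Gam {V Ed : Type} (head : Ed -> V) (pos : V -> point) (curve : Ed -> R -> point)
  (v : V) (es : list Ed) (t : R) : point :=
  if Rle_dec t 0 then (fst (pos v), snd (pos v) + t) else gam head pos curve v es t.

Definition fy {V Ed : Type} (head : Ed -> V) (pos : V -> point) (curve : Ed -> R -> point)
  (v : V) (es : list Ed) (t : R) : R := snd (Gam head pos curve v es t).

Definition Xp {V Ed : Type} (head : Ed -> V) (pos : V -> point) (curve : Ed -> R -> point)
  (v : V) (es : list Ed) (b : R) : R :=
  fst (Gam head pos curve v es (Ginv (fy head pos curve v es) b)).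

Section S2.
Context {V Ed : Type} {tail head : Ed -> V} {pos : V -> point} {curve : Ed -> R -> point}.
Context (Dr : upward_planar_drawing V Ed tail head pos curve).
Context (v : V) (es : list Ed) (vs : list V) (Hc : chain tail head v es vs).

Lemma Gam_eq t : 0 <= t -> Gam head pos curve v es t = gam head pos curve v es t.
Proof.
  intros Ht. unfold Gam. destruct (Rle_dec t 0); auto.
  assert (t = 0) by lra. subst. rewrite (gam0 Dr v es vs Hc).
  destruct (pos v); simpl; f_equal; ring.
Qed.

Lemma Gam_mono s t : s < t -> fy head pos curve v es s < fy head pos curve v es t.
Proof.
  intros Hst. unfold fy.
  destruct (Rle_dec 0 s).
  - rewrite !Gam_eq by lra. apply (gam_mono Dr v es vs Hc); lra.
  - unfold Gam at 1. destruct (Rle_dec s 0); [|lra]. simpl.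
    destruct (Rle_dec t 0).
    + unfold Gam. destruct (Rle_dec t 0); [simpl; lra | lra].
    + rewrite Gam_eq by lra. pose proof (gam_mono Dr v es vs Hc 0 t) as M.
      rewrite (gam0 Dr v es vs Hc) in M. assert (snd (pos v) < snd (gam head pos curve v es t)) by (apply M; lra).
      lra.
Qed.

Lemma Gam_cont (pr : point -> R) :
  (forall e s, in01 s -> continuity_pt (fun t => pr (curve e t)) s) ->
  (forall w a, continuity_pt (fun t => pr (fst (pos w), snd (pos w) + t)) a) ->
  forall a, continuity_pt (fun t => pr (Gam head pos curve v es t)) a.
Proof.
  intros Hce Hb a. unfold Gam.
  destruct (Rtotal_order a 0) as [Hl|[He|Hg]].
  - apply (glue (fun t => pr (fst (pos v), snd (pos v) + t)) (fun t => pr (fst (pos v), snd (pos v) + t)) _ a (- a)); auto; try lra.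
    + intros x Hx. destruct (Rle_dec x 0); [auto|lra].
    + intros x Hx. destruct (Rle_dec x 0); [auto|lra].
  - subst a. apply (glue (fun t => pr (fst (pos v), snd (pos v) + t)) (fun t => pr (gam head pos curve v es t)) _ 0 1); auto; try lra.
    + apply (gam_cont Dr pr v es vs Hc Hce Hb). lra.
    + rewrite (gam0 Dr v es vs Hc). f_equal. destruct (pos v); simpl; f_equal; ring.
    + intros x Hx. destruct (Rle_dec x 0); [auto|lra].
    + intros x Hx. destruct (Rle_dec x 0); [lra|auto].
  - apply (glue (fun t => pr (gam head pos curve v es t)) (fun t => pr (gam head pos curve v es t)) _ a a); auto; try lra.
    + apply (gam_cont Dr pr v es vs Hc Hce Hb). lra.
    + apply (gam_cont Dr pr v es vs Hc Hce Hb). lra.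
    + intros x Hx. destruct (Rle_dec x 0); [lra|auto].
    + intros x Hx. destruct (Rle_dec x 0); [lra|auto].
Qed.

Lemma Gam_cont_fst a : continuity_pt (fun t => fst (Gam head pos curve v es t)) a.
Proof.
  apply Gam_cont.
  - intros e s Hs. destruct Dr as [_ [H _]]. apply (H e s Hs).
  - intros w a'. apply (cont_ext (fun _ => fst (pos w))); [intros; reflexivity| apply cont_cst].
Qed.

Lemma Gam_cont_snd a : continuity_pt (fy head pos curve v es) a.
Proof.
  apply Gam_cont.
  - intros e s Hs. destruct Dr as [_ [H _]]. apply (H e s Hs).
  - intros w a'. apply (cont_ext (fun t => snd (pos w) + t)); [intros; reflexivity| apply cont_lin].
Qed.

Lemma Gam_unb b : exists lb ub, fy head pos curve v es lb < b < fy head pos curve v es ub.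
Proof.
  set (lb := Rmin (-1) (b - snd (pos v) - 1)).
  pose proof (pos_INR (length es)). set (k := INR (length es)) in *.
  set (ub := Rmax (k + 1) (k + b - snd (pos (lastv v vs)) + 1)).
  exists lb, ub. unfold fy, Gam. split.
  - pose proof (Rmin_l (-1) (b - snd (pos v) - 1)). pose proof (Rmin_r (-1) (b - snd (pos v) - 1)).
    fold lb in H0, H1. destruct (Rle_dec lb 0); simpl; lra.
  - pose proof (Rmax_l (k + 1) (k + b - snd (pos (lastv v vs)) + 1)).
    pose proof (Rmax_r (k + 1) (k + b - snd (pos (lastv v vs)) + 1)). fold ub in H0, H1.
    destruct (Rle_dec ub 0); [lra|]. rewrite (gam_tail v es vs Hc) by (fold k; lra).
    simpl. fold k. lra.
Qed.

Lemma Ginv_eq b : fy head pos curve v es (Ginv (fy head pos curve v es) b) = b.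
Proof. apply Ginv_spec; [exact Gam_mono | exact Gam_cont_snd | exact Gam_unb]. Qed.

Lemma Xp_cont b : continuity_pt (Xp head pos curve v es) b.
Proof.
  apply (cont_ext (comp (fun t => fst (Gam head pos curve v es t)) (Ginv (fy head pos curve v es)))).
  { intros; reflexivity. }
  apply continuity_pt_comp.
  - apply Ginv_cont; [exact Gam_mono | exact Gam_cont_snd | exact Gam_unb].
  - apply Gam_cont_fst.
Qed.

Lemma fy0 : fy head pos curve v es 0 = snd (pos v).
Proof. unfold fy. rewrite Gam_eq by lra. rewrite (gam0 Dr v es vs Hc); auto. Qed.

Lemma fyk : fy head pos curve v es (INR (length es)) = snd (pos (lastv v vs)).
Proof. unfold fy. rewrite Gam_eq by apply pos_INR. rewrite (gam_end Dr v es vs Hc); auto. Qed.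

Lemma yle : snd (pos v) <= snd (pos (lastv v vs)).
Proof. rewrite <- fy0, <- fyk. apply (strict_le _ Gam_mono). apply pos_INR. Qed.

Lemma Xpt b : snd (pos v) <= b <= snd (pos (lastv v vs)) ->
  ptsL pos curve (v :: vs) es (Xp head pos curve v es b, b).
Proof.
  intros Hb. set (t := Ginv (fy head pos curve v es) b).
  assert (Ht : fy head pos curve v es t = b) by apply Ginv_eq.
  assert (H0 : 0 <= t).
  { destruct (Rle_lt_dec 0 t); auto. apply Gam_mono in r. rewrite fy0, Ht in r. lra. }
  assert (H1 : t <= INR (length es)).
  { destruct (Rle_lt_dec t (INR (length es))); auto. apply Gam_mono in r. rewrite fyk, Ht in r. lra. }
  unfold Xp. fold t. rewrite <- Ht. unfold fy.
  replace (fst (Gam head pos curve v es t), snd (Gam head pos curve v es t)) with (Gam head pos curve v es t)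
    by (destruct (Gam head pos curve v es t); auto).
  rewrite Gam_eq by auto. apply (gam_pts2 Dr v es vs Hc). lra.
Qed.

Lemma Xuniq z : ptsL pos curve (v :: vs) es z ->
  Xp head pos curve v es (snd z) = fst z /\ snd (pos v) <= snd z <= snd (pos (lastv v vs)).
Proof.
  intros Hz. destruct (gam_pts1 Dr v es vs Hc z Hz) as [t [Ht E]].
  rewrite <- Gam_eq in E by lra.
  assert (Hs : snd z = fy head pos curve v es t) by (unfold fy; rewrite E; auto).
  split.
  - unfold Xp. rewrite Hs.
    assert (Ginv (fy head pos curve v es) (fy head pos curve v es t) = t).
    { apply (strict_inj _ Gam_mono). apply Ginv_eq. }
    rewrite H, E; auto.
  - rewrite Hs, <- fy0, <- fyk. split; apply (strict_le _ Gam_mono); lra.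
Qed.

End S2.

Lemma last_lastv {V : Type} (vs : list V) : forall v d, last (v :: vs) d = lastv v vs.
Proof.
  induction vs as [|w vs IH]; intros v d; [reflexivity|].
  change (last (w :: vs) d = lastv w vs). apply IH.
Qed.

Lemma chain_of_nth {V Ed : Type} (tail head : Ed -> V) (es : list Ed) : forall v vs,
  length (v :: vs) = S (length es) ->
  (forall i e, nth_error es i = Some e ->
     nth_error (v :: vs) i = Some (tail e) /\ nth_error (v :: vs) (S i) = Some (head e)) ->
  chain tail head v es vs.
Proof.
  induction es as [|e es IH]; intros v vs Hl Hn.
  - destruct vs; simpl in *; [auto|discriminate].
  - destruct vs as [|w vs]; simpl in Hl; [discriminate|].
    destruct (Hn 0%nat e eq_refl) as [H1 H2]. simpl in H1, H2. injection H1; injection H2; intros E1 E2.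
    simpl. split; [auto|split; [auto|]]. apply IH; [simpl; auto|].
    intros i e' He'. destruct (Hn (S i) e' He') as [K1 K2]. simpl in K1, K2. auto.
Qed.

Section S3.
Context {V Ed : Type} {tail head : Ed -> V} {pos : V -> point} {curve : Ed -> R -> point}.
Context (Dr : upward_planar_drawing V Ed tail head pos curve).

Lemma vert_on_edge v es vs x e s : chain tail head v es vs -> In e es -> in01 s ->
  pos x = curve e s -> In x (v :: vs).
Proof.
  intros Hc He Hs E. destruct Dr as [Hinj [_ [Hend [_ [Hav _]]]]].
  destruct (chain_mem v es vs Hc e He) as [Ht Hh]. unfold in01 in Hs.
  destruct (Req_dec s 0) as [->|H0].
  - rewrite (proj1 (Hend e)) in E. apply Hinj in E. subst; auto.
  - destruct (Req_dec s 1) as [->|H1].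
    + rewrite (proj2 (Hend e)) in E. apply Hinj in E. subst; auto.
    + exfalso. apply (Hav e s x); [lra|auto].
Qed.

Lemma common v1 es1 vs1 v2 es2 vs2 z : chain tail head v1 es1 vs1 -> chain tail head v2 es2 vs2 ->
  (forall x, In x (v1 :: vs1) -> ~ In x (v2 :: vs2)) ->
  ptsL pos curve (v1 :: vs1) es1 z -> ptsL pos curve (v2 :: vs2) es2 z -> False.
Proof.
  intros C1 C2 Hd Z1 Z2. pose proof Dr as Dr'. destruct Dr' as [Hinj [_ [_ [_ [_ Hpl]]]]].
  destruct Z1 as [[x1 [Hx1 E1]]|[e1 [s1 [He1 [Hs1 E1]]]]];
  destruct Z2 as [[x2 [Hx2 E2]]|[e2 [s2 [He2 [Hs2 E2]]]]]; subst z.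
  - apply Hinj in E2. subst x2. apply (Hd x1); auto.
  - apply (Hd x1); auto. apply (vert_on_edge v2 es2 vs2 x1 e2 s2); auto.
  - apply (Hd x2); auto. apply (vert_on_edge v1 es1 vs1 x2 e1 s1); auto.
  - destruct (classic (e1 = e2)) as [<-|Hne].
    + apply (Hd (tail e1)); [apply (chain_mem v1 es1 vs1 C1 e1 He1) | apply (chain_mem v2 es2 vs2 C2 e1 He2)].
    + destruct (Hpl e1 e2 s1 s2 Hne Hs1 Hs2 E2) as [x Hx].
      apply (Hd x).
      * apply (vert_on_edge v1 es1 vs1 x e1 s1); auto.
      * apply (vert_on_edge v2 es2 vs2 x e2 s2); auto. rewrite <- Hx; auto.
Qed.

Lemma no_cross v1 es1 vs1 v2 es2 vs2 p q : chain tail head v1 es1 vs1 -> chain tail head v2 es2 vs2 ->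
  (forall x, In x (v1 :: vs1) -> ~ In x (v2 :: vs2)) ->
  ptsL pos curve (v2 :: vs2) es2 p ->
  snd (pos v1) <= snd p <= snd (pos (lastv v1 vs1)) ->
  (forall u', ptsL pos curve (v1 :: vs1) es1 (u', snd p) -> u' < fst p) ->
  ptsL pos curve (v1 :: vs1) es1 q ->
  snd (pos v2) <= snd q <= snd (pos (lastv v2 vs2)) ->
  (forall u', ptsL pos curve (v2 :: vs2) es2 (u', snd q) -> u' < fst q) ->
  False.
Proof.
  intros C1 C2 Hd Hp Rp Kp Hq Rq Kq.
  set (X1 := Xp head pos curve v1 es1). set (X2 := Xp head pos curve v2 es2).
  destruct (Xuniq Dr v2 es2 vs2 C2 p Hp) as [Ep Rp2].
  destruct (Xuniq Dr v1 es1 vs1 C1 q Hq) as [Eq Rq1].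
  pose proof (Kp _ (Xpt Dr v1 es1 vs1 C1 (snd p) Rp)) as Lp.
  pose proof (Kq _ (Xpt Dr v2 es2 vs2 C2 (snd q) Rq)) as Lq.
  fold X1 X2 in Ep, Eq, Lp, Lq.
  set (Dd := fun b => X2 b - X1 b).
  assert (Dc : forall b, continuity_pt Dd b).
  { intros b. apply (cont_ext (X2 - X1)%F); [intros; reflexivity|].
    apply continuity_pt_minus; [apply (Xp_cont Dr v2 es2 vs2 C2) | apply (Xp_cont Dr v1 es1 vs1 C1)]. }
  assert (Dp : 0 < Dd (snd p)) by (unfold Dd; lra).
  assert (Dq : Dd (snd q) < 0) by (unfold Dd; lra).
  assert (Hh : exists h, Rmin (snd p) (snd q) <= h <= Rmax (snd p) (snd q) /\ Dd h = 0).
  { destruct (Rtotal_order (snd p) (snd q)) as [Hl|[He|Hg]].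
    - destruct (IVT_interv (fun b => - Dd b) (snd p) (snd q)) as [h [Hh1 Hh2]]; auto; try lra.
      + intros a _. apply (cont_ext (- Dd)%F); [intros; reflexivity|]. apply continuity_pt_opp; auto.
      + exists h. rewrite Rmin_left, Rmax_right by lra. split; [auto|lra].
    - rewrite He in Dp. lra.
    - destruct (IVT_interv Dd (snd q) (snd p)) as [h [Hh1 Hh2]]; auto; try lra.
      exists h. rewrite Rmin_right, Rmax_left by lra. split; auto. }
  destruct Hh as [h [Hh HD]].
  assert (R1 : snd (pos v1) <= h <= snd (pos (lastv v1 vs1))).
  { destruct (Rle_dec (snd p) (snd q)).
    - rewrite Rmin_left, Rmax_right in Hh by lra. lra.
    - rewrite Rmin_right, Rmax_left in Hh by lra. lra. }
  assert (R2 : snd (pos v2) <= h <= snd (pos (lastv v2 vs2))).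
  { destruct (Rle_dec (snd p) (snd q)).
    - rewrite Rmin_left, Rmax_right in Hh by lra. lra.
    - rewrite Rmin_right, Rmax_left in Hh by lra. lra. }
  pose proof (Xpt Dr v1 es1 vs1 C1 h R1) as P1. pose proof (Xpt Dr v2 es2 vs2 C2 h R2) as P2.
  fold X1 X2 in P1, P2. replace (X2 h) with (X1 h) in P2 by (unfold Dd in HD; lra).
  apply (common v1 es1 vs1 v2 es2 vs2 _ C1 C2 Hd P1 P2).
Qed.

End S3.

Lemma path_chain {V Ed : Type} (tail head : Ed -> V) (P : dpath V Ed) :
  is_dpath V Ed tail head P -> exists v vs, pverts V Ed P = v :: vs /\ chain tail head v (pedges V Ed P) vs.
Proof.
  intros [Hne [_ [Hl Hn]]]. destruct (pverts V Ed P) as [|v vs] eqn:E; [contradiction|].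
  exists v, vs. split; auto. apply chain_of_nth; auto.
Qed.

Theorem lemma7 (V Ed : Type) (tail head : Ed -> V)
  (pos : V -> point) (curve : Ed -> R -> point)
  (F : dpath V Ed -> Prop) :
  finite_digraph V Ed ->
  upward_planar_drawing V Ed tail head pos curve ->
  disjoint_path_family V Ed tail head F ->
  (forall P, ~ prec_in V Ed pos curve F P P) /\
  (forall P1 P2, prec_in V Ed pos curve F P1 P2 -> ~ prec_in V Ed pos curve F P2 P1).
Proof.
  intros _ Dr [Hpath Hdisj]. split.
  - intros P [_ [_ [p [Hp [Hn _]]]]]. auto.
  - intros P1 P2 [F1 [F2 [p [Hp [Hnp Rp]]]]] [_ [_ [q [Hq [Hnq Rq]]]]].
    destruct (classic (P1 = P2)) as [<-|Hne]; [auto|].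
    destruct (path_chain tail head P1 (Hpath P1 F1)) as [v1 [vs1 [E1 C1]]].
    destruct (path_chain tail head P2 (Hpath P2 F2)) as [v2 [vs2 [E2 C2]]].
    pose proof (yle Dr v1 _ vs1 C1) as Y1. pose proof (yle Dr v2 _ vs2 C2) as Y2.
    unfold pts in *. rewrite E1 in *. rewrite E2 in *.
    specialize (Rp v1). specialize (Rq v2).
    unfold first_vertex, last_vertex in Rp, Rq. rewrite E1 in Rp. rewrite E2 in Rq.
    simpl hd in Rp, Rq. rewrite last_lastv in Rp, Rq.
    rewrite Rmin_left, Rmax_right in Rp by auto. rewrite Rmin_left, Rmax_right in Rq by auto.
    destruct Rp as [Rp Kp]. destruct Rq as [Rq Kq].
    apply (no_cross Dr v1 (pedges V Ed P1) vs1 v2 (pedges V Ed P2) vs2 p q C1 C2); auto.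
    intros x Hx1 Hx2. apply (Hdisj P1 P2 F1 F2 Hne x); [rewrite E1 | rewrite E2]; auto.
    + intros u' H. apply Kp. unfold pts. rewrite E1. exact H.
    + intros u' H. apply Kq. unfold pts. rewrite E2. exact H.
Qed.
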